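(* Let $0\le d<r\le\min\{m,n\}$ and $\mathcal{R}\in\mathcal{Z}_{n,m,d}$. Then \[\mathfrak{m}(\mathcal{R})\equiv\frac{1}{r-d}\sum_{\mathcal{R}'}\mathfrak{m}(\mathcal{R}')\pmod{\mathbf{I}(\mathcal{Z}_{n,m,r})},\] where the sum runs over all rook placements $\mathcal{R}'\supseteq\mathcal{R}$ with $|\mathcal{R}'|=d+1$.
   Context: Fix positive integers $n,m$. $\mathbb{C}[\mathbf{x}_{n\times m}]$ is the polynomial ring in variables $x_{i,j}$ ($1\le i\le n,1\le j\le m$). A rook placement on the $n\times m$ board is a subset $\mathcal{R}\subseteq[n]\times[m]$ with at most one element in each row and column, identified with its $0/1$ matrix in $\mathrm{Mat}_{n\times m}(\mathbb{C})$; $\mathcal{Z}_{n,m,d}$ is the set of rook placements with exactly $d$ elements; $\mathfrak{m}(\mathcal{R}):=\prod_{(i,j)\in\mathcal{R}}x_{i,j}$. $\mathbf{I}(\mathcal{Z})$ is the ideal of polynomials vanishing on the finite set $\mathcal{Z}$. *)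

(* Defs.v *)
From HB Require Import structures.
From mathcomp Require Import all_boot all_order all_algebra all_field.
From mathcomp Require Import mpoly.
Set Implicit Arguments. Unset Strict Implicit. Unset Printing Implicit Defensive.
Import Order.TTheory GRing.Theory Num.Theory.
Local Open Scope ring_scope.

Definition xvar (n m : nat) (i : 'I_n) (j : 'I_m) : {mpoly algC[n * m]} :=
  'X_(mxvec_index i j).

Definition is_rook (n m : nat) (R : {set 'I_n * 'I_m}) : bool :=
  [forall x in R, forall y in R,
     ((x.1 == y.1) ==> (x == y)) && ((x.2 == y.2) ==> (x == y))].

Definition Zrook (n m d : nat) : {set {set 'I_n * 'I_m}} :=
  [set R | is_rook R & #|R| == d].

Definition rook_mx (n m : nat) (R : {set 'I_n * 'I_m}) : 'M[algC]_(n, m) :=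
  \matrix_(i, j) (if (i, j) \in R then 1 else 0).

Definition eval_at (n m : nat) (A : 'M[algC]_(n, m)) (p : {mpoly algC[n * m]}) : algC :=
  p.@[fun k => mxvec A 0 k].

Definition rook_monomial (n m : nat) (R : {set 'I_n * 'I_m}) : {mpoly algC[n * m]} :=
  \prod_(ij in R) xvar ij.1 ij.2.

(* I(Z): the ideal of polynomials vanishing on a finite set Z of points
   (here Z is a set of rook placements, identified with their matrices). *)
Definition vanishing_ideal (n m : nat) (Z : {set {set 'I_n * 'I_m}}) :
  pred {mpoly algC[n * m]} :=
  fun p => [forall R in Z, eval_at (rook_mx R) p == 0].

Definition congr_mod_I (n m : nat) (Z : {set {set 'I_n * 'I_m}})
  (p q : {mpoly algC[n * m]}) : Prop :=
  p - q \in vanishing_ideal Z.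

(* Main.v *)
Require Import Defs.
From HB Require Import structures.
From mathcomp Require Import all_boot all_order all_algebra all_field.
From mathcomp Require Import mpoly.
Import Order.TTheory GRing.Theory Num.Theory.
Local Open Scope ring_scope.

Lemma eval_mono n m (S R : {set 'I_n * 'I_m}) :
  eval_at (rook_mx S) (rook_monomial R) = if R \subset S then 1 else 0.
Proof.
rewrite /eval_at /rook_monomial rmorph_prod /=.
under eq_bigr => ij _ do rewrite /xvar mevalXU mxvecE mxE -surjective_pairing.
case: ifP => [/subsetP sRS|].
  by apply: big1 => ij /sRS ->.
move/negbT/subsetPn => [ij ijR ijS].
by rewrite (bigD1 ij) //= (negbTE ijS) mul0r.
Qed.

Lemma rook_sub n m (S R : {set 'I_n * 'I_m}) :
  is_rook S -> R \subset S -> is_rook R.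
Proof.
move=> /forallP hS /subsetP sRS; apply/forallP => x; apply/implyP => xR.
apply/forallP => y; apply/implyP => yR.
by have := hS x; rewrite (sRS _ xR) /= => /forallP /(_ y); rewrite (sRS _ yR).
Qed.

Theorem mainTheorem9 (n m d r : nat) (R : {set 'I_n * 'I_m}) :
  (d < r)%N -> (r <= minn m n)%N -> R \in Zrook n m d ->
  congr_mod_I (Zrook n m r) (rook_monomial R)
    (((r - d)%:R)^-1 *:
       \sum_(R' in Zrook n m d.+1 | R \subset R') rook_monomial R').
Proof.
move=> ltdr _; rewrite inE => /andP [rookR /eqP cR].
rewrite /congr_mod_I /vanishing_ideal unfold_in; apply/forallP => S.
apply/implyP; rewrite inE => /andP [rookS /eqP cS].
rewrite /eval_at mevalB mevalZ raddf_sum /=.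
under eq_bigr => R' _ do rewrite -/(eval_at _ _) eval_mono.
rewrite -/(eval_at _ _) eval_mono.
case: (boolP (R \subset S)) => sRS; last first.
  rewrite big1 ?mulr0 ?subr0 // => R' /andP [_ sRR'].
  case: ifP => // sR'S; by rewrite (subset_trans sRR' sR'S) in sRS.
rewrite -big_mkcondr /= sumr_const.
have E : forall R', (R' \in Zrook n m d.+1) && (R \subset R') && (R' \subset S)
   = (R' \in [set e |: R | e in S :\: R]).
    move=> R'; rewrite !inE /=; apply/idP/imsetP.
      case/andP=> [/andP [/andP [_ /eqP cR'] sRR'] sR'S].
      have : #|R' :\: R| = 1%N by rewrite cardsD (setIidPr sRR') cR' cR subSnn.
      move/eqP/cards1P => [e he]; exists e.
        have : e \in R' :\: R by rewrite he set11.
        by rewrite !inE => /andP [-> /(subsetP sR'S) ->].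
      apply/setP => x; rewrite !inE; case: (boolP (x \in R)) => xR.
        by rewrite orbT (subsetP sRR').
      by rewrite orbF -in_set1 -he inE xR.
    case=> e /setDP [eS eR] ->.
    have sES : (e |: R) \subset S by rewrite subUset sub1set eS sRS.
    rewrite sES.
    rewrite subsetUr (@rook_sub _ _ S (e |: R) rookS) //=.
    by rewrite cardsU1 eR cR !andbT add1n.
rewrite (eq_card E) card_in_imset; last first.
  move=> e1 e2; rewrite !inE.
  move=> /andP [e1R _] /andP [e2R _] h.
  have : e1 \in e2 |: R by rewrite -h setU11.
  case/setU1P => // abs; by rewrite abs in e1R.
rewrite cardsD (setIidPr sRS) cS cR mulVf ?subrr //.
by rewrite pnatr_eq0 subn_eq0 -ltnNge.
Qed.
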